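(* Let $S\subseteq\{(i,j)\in[n]\times[n]:i<j\}$ be such that $U_S:=\{I_n+\sum_{(i,j)\in S}a_{ij}E_{ij}: a_{ij}\in\mathbb F\}$ is a subgroup of $U_n$. Then $U_S$ is generated by $\{I_n+\lambda E_{ij}:(i,j)\in S,\ \lambda\in\mathbb F\}$, and every element of $U_S$ is a product of at most $|S|$ elements of this set.
   Context: $\mathbb F$ is a field; $[n]=\{1,\dots,n\}$; $U_n$ is the group of $n\times n$ upper triangular matrices over $\mathbb F$ with all diagonal entries $1$; $E_{ij}$ is the matrix unit. *)

(* Defs.v *)
From HB Require Import structures.
From mathcomp Require Import all_boot all_order all_algebra.
Set Implicit Arguments. Unset Strict Implicit. Unset Printing Implicit Defensive.
Import GRing.Theory.
Local Open Scope ring_scope.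

(* Matrices are 'M[F]_n with indices 'I_n = {0,...,n-1} (standing for [n]). *)

Definition Eij (F : fieldType) (n : nat) (i j : 'I_n) : 'M[F]_n := delta_mx i j.

Definition elemU (F : fieldType) (n : nat) (i j : 'I_n) (l : F) : 'M[F]_n :=
  1%:M + l *: @Eij F n i j.

Definition in_Un (F : fieldType) (n : nat) (M : 'M[F]_n) : Prop :=
  (forall i, M i i = 1) /\ (forall i j : 'I_n, (j < i)%N -> M i j = 0).

Definition in_US (F : fieldType) (n : nat) (S : {set 'I_n * 'I_n}) (M : 'M[F]_n) : Prop :=
  exists a : 'I_n -> 'I_n -> F,
    M = 1%:M + \sum_(p in S) a p.1 p.2 *: @Eij F n p.1 p.2.

Definition subgroup_of_Un (F : fieldType) (n : nat) (P : 'M[F]_n -> Prop) : Prop :=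
  [/\ (forall M, P M -> in_Un M),
      P 1%:M,
      (forall A B, P A -> P B -> P (A *m B)) &
      (forall A, P A -> A \in unitmx /\ P (invmx A))].

Definition mprod (F : fieldType) (n : nat) (s : seq 'M[F]_n) : 'M[F]_n :=
  foldr (fun A B => A *m B) 1%:M s.

Definition in_gens (F : fieldType) (n : nat) (S : {set 'I_n * 'I_n}) (M : 'M[F]_n) : Prop :=
  exists2 p, p \in S & exists l : F, M = @elemU F n p.1 p.2 l.

Definition in_generated (F : fieldType) (n : nat) (X : 'M[F]_n -> Prop) (M : 'M[F]_n) : Prop :=
  exists s : seq 'M[F]_n,
    (forall A, A \in s -> X A \/ (A \in unitmx /\ X (invmx A))) /\ M = mprod s.

(* Main.v *)
Require Import Defs.
From mathcomp Require Import all_boot all_order all_algebra.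
Set Implicit Arguments. Unset Strict Implicit. Unset Printing Implicit Defensive.
Import GRing.Theory.
Local Open Scope ring_scope.

Lemma entry_mulE (F : fieldType) n (M : 'M[F]_n) i j l p q :
  (M *m elemU i j l) p q = M p q + l * (M p i * (q == j)%:R).
Proof.
rewrite /elemU /Eij mulmxDr mulmx1 -scalemxAr !mxE; congr (_ + _ * _).
rewrite (bigD1 i) //= big1 => [|k kneq]; rewrite !mxE ?eqxx.
  by rewrite addr0 andbC /=; case: (q == j); rewrite ?mulr1 ?mulr0.
by rewrite (negbTE kneq) mulr0.
Qed.

Lemma mprod_cat (F : fieldType) n (s1 s2 : seq 'M[F]_n) :
  mprod (s1 ++ s2) = mprod s1 *m mprod s2.
Proof. elim: s1 => [|a s IH] /=; first by rewrite /mprod /= mul1mx.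
by rewrite /mprod /= -/(mprod _) IH mulmxA. Qed.

Lemma elemU_inv (F : fieldType) n (i j : 'I_n) l : i != j ->
  @elemU F n i j (- l) *m elemU i j l = 1%:M.
Proof.
move=> ij; rewrite /elemU /Eij mulmxDr mulmx1 mulmxDl mul1mx -!scalemxAr -scalemxAl.
rewrite mul_delta_mx_0 1?eq_sym // !scaler0 addr0 scaleNr.
by rewrite addrAC -addrA subrr addr0.
Qed.

Lemma in_US_zero (F : fieldType) n (S : {set 'I_n * 'I_n}) (M : 'M[F]_n) (p q : 'I_n) :
  in_US S M -> (p, q) \notin S -> p != q -> M p q = 0.
Proof.
move=> [a ->] pqS pq; rewrite !mxE summxE (negbTE pq) add0r big1 // => x xS.
rewrite !mxE; case: (_ =P _) => [ex|]; last by rewrite mulr0.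
case: (_ =P _) => [eq|]; last by rewrite mulr0.
by move: pqS; rewrite ex eq -surjective_pairing xS.
Qed.

Lemma elemU_in_US (F : fieldType) n (S : {set 'I_n * 'I_n}) (i j : 'I_n) l :
  (i, j) \in S -> in_US S (@elemU F n i j l).
Proof.
move=> ijS; exists (fun x y => if (x == i) && (y == j) then l else 0).
rewrite /elemU; congr (_ + _).
rewrite (bigD1 (i, j)) //= !eqxx /= big1 ?addr0 // => x /andP [_ xne].
case: ifP => [/andP [/eqP e1 /eqP e2]|_]; last by rewrite scale0r.
by move: xne; rewrite -e1 -e2 -surjective_pairing eqxx.
Qed.
From mathcomp Require Import zify.

Lemma key_inj n (p q i j : 'I_n) : (q * n + p = j * n + i)%N -> p = i /\ q = j.
Proof.
move=> e; have n0 : (0 < n)%N by apply: leq_ltn_trans (ltn_ord p).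
have e1 := congr1 (fun x => x %% n)%N e; have e2 := congr1 (fun x => x %/ n)%N e.
move: e1 e2 => /=; rewrite !modnMDl !divnMDl // !modn_small // !divn_small // !addn0.
by move=> h1 h2; split; apply: val_inj.
Qed.

Section Main.
Variables (F : fieldType) (n : nat) (S : {set 'I_n * 'I_n}).
Hypothesis hS : forall p, p \in S -> (p.1 < p.2)%N.
Hypothesis hG : subgroup_of_Un (in_US (F := F) S).

Lemma main_ind m : forall M : 'M[F]_n, in_US S M ->
  (forall p q : 'I_n, p != q -> (m <= q * n + p)%N -> M p q = 0) ->
  exists s : seq 'M[F]_n, (forall A, A \in s -> in_gens S A) /\
    (size s <= #|[set x in S | (x.2 * n + x.1 < m)%N]|)%N /\ M = mprod s.
Proof.
case: hG => hUn h1 hmul hinv.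
elim: m => [|m IH] M MS Mz.
  exists [::]; split => //; split => //.
  apply/matrixP => p q; rewrite /mprod /= !mxE.
  case: (eqVneq p q) => [->|pq]; first by rewrite (proj1 (hUn _ MS)).
  by rewrite Mz.
case: (pickP [pred x in S | (x.2 * n + x.1 == m)%N]) => [[i j] /andP [/= ijS /eqP km] | none].
  set c := M i j.
  have ij : i != j by have := hS ijS; rewrite /= neq_ltn => ->.
  have M'S : in_US S (M *m elemU i j (- c)) by apply: hmul => //; apply: elemU_in_US.
  have [|s [sg [ssz sM]]] := IH _ M'S.
    move=> p q pq le; rewrite entry_mulE.
    case: (eqVneq q j) => [eqj|nej]; last first.
      rewrite mulr0 mulr0 addr0 Mz //.
      rewrite leq_eqVlt in le; case/orP: le => [/eqP e|//].
      by have [_ /eqP] := key_inj (etrans (esym e) (esym km)); rewrite (negbTE nej).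
    rewrite eqj mulr1 in le *.
    case: (ltngtP p i) => [lt|gt|eq].
    - by exfalso; move: le; rewrite -km; lia.
    - rewrite Mz; last by rewrite -km; lia.
        by rewrite (proj2 (hUn _ MS) p i gt) mulr0 addr0.
      by rewrite -eqj.
    - have -> : p = i by apply: val_inj.
      by rewrite (proj1 (hUn _ MS)) mulr1 /c subrr.
  exists (s ++ [:: elemU i j c]); split.
    move=> A; rewrite mem_cat => /orP [/sg //|]; rewrite inE => /eqP ->.
    by exists (i, j) => //; exists c.
  split.
    rewrite size_cat /= addn1; apply: leq_ltn_trans ssz _; apply: proper_card.
    apply/properP; split.
      by apply/subsetP => x; rewrite !inE => /andP [-> /= h]; apply: leqW.
    exists (i, j); first by rewrite !inE ijS /= km.
    by rewrite !inE ijS /= km ltnn.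
  rewrite mprod_cat -sM /mprod /= mulmx1 -mulmxA elemU_inv // mulmx1 //.
have [|s [sg [ssz sM]]] := IH _ MS.
  move=> p q pq le; rewrite leq_eqVlt in le; case/orP: le => [/eqP e|]; last exact: Mz.
  apply: (in_US_zero MS) => //; apply/negP => pS.
  by have := none (p, q); rewrite /= pS /= e eqxx.
exists s; split => //; split => //; apply: leq_trans ssz _; apply: subset_leq_card.
by apply/subsetP => x; rewrite !inE => /andP [-> /= h]; apply: leqW.
Qed.
End Main.

Theorem lemma2p13 (F : fieldType) (n : nat) (S : {set 'I_n * 'I_n}) :
  (forall p, p \in S -> (p.1 < p.2)%N) ->
  subgroup_of_Un (in_US (F := F) S) ->
  (forall M : 'M[F]_n, in_US S M <-> in_generated (in_gens S) M) /\
  (forall M : 'M[F]_n, in_US S M ->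
     exists s : seq 'M[F]_n,
       (forall A, A \in s -> in_gens S A) /\ (size s <= #|S|)%N /\ M = mprod s).
Proof.
move=> hS hG.
have P2 : forall M : 'M[F]_n, in_US S M ->
     exists s : seq 'M[F]_n,
       (forall A, A \in s -> in_gens S A) /\ (size s <= #|S|)%N /\ M = mprod s.
  move=> M MS; have [|s [sg [ssz sM]]] := main_ind hS hG (m := (n * n)%N) MS.
    move=> p q _ le; exfalso; move: le; apply/negP; rewrite -ltnNge.
    have h1 : (q * n + p < q.+1 * n)%N by rewrite mulSn addnC ltn_add2r.
    by apply: (leq_trans h1); apply: leq_mul (ltn_ord q) (leqnn n).
  exists s; split => //; split => //; apply: leq_trans ssz _.
  by apply: subset_leq_card; apply/subsetP => x; rewrite inE => /andP [].
split => // M; split.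
  move=> /P2 [s [sg [_ ->]]]; exists s; split => // A /sg; by left.
case: hG => hUn h1 hmul hinv.
have G_US : forall A : 'M[F]_n, in_gens S A -> in_US S A.
  by move=> A [[i j] ijS [l ->]]; apply: elemU_in_US.
move=> [s [sg ->]]; elim: s sg => [|a s IH] sg; first exact: h1.
rewrite /mprod /= -/(mprod _); apply: hmul; last first.
  by apply: IH => A As; apply: sg; rewrite inE As orbT.
case: (sg a (mem_head _ _)) => [/G_US //|[au /G_US ai]].
by rewrite -(invmxK a); apply: (proj2 (hinv _ ai)).
Qed.
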